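(* Let $N\ge 2$ and let $\gamma_k$ ($k=1,\dots,N-1$) be as defined below. Then as $\lambda\to+\infty$, $$R_1=\sum_{k=1}^{N-1}\frac{k_{k+1}^2-k_k^2}{4\lambda^2}\Big(1+\mathcal{O}\big(\lambda^{-2}\big)\Big)\exp(-\gamma_k\lambda),$$ meaning that there are functions $\epsilon_k(\lambda)=\mathcal{O}(\lambda^{-2})$ as $\lambda\to+\infty$ such that $R_1=\sum_{k=1}^{N-1}\frac{k_{k+1}^2-k_k^2}{4\lambda^2}(1+\epsilon_k(\lambda))\exp(-\gamma_k\lambda)$ for all sufficiently large $\lambda$.
   Context: Fix real constants $\omega>0$, $\mu>0$, an integer $N\ge 2$, conductivities $\sigma_1,\dots,\sigma_N>0$ and thicknesses $h_1,\dots,h_{N-1}>0$. For $j=1,\dots,N$ let $k_j$ be a complex number with $k_j^2=-i\omega\mu\sigma_j$, and set $k_0:=0$. For real $\lambda>0$ define $u_0(\lambda)=\lambda$ and $u_j(\lambda)=\sqrt{\lambda^2-k_j^2}=\sqrt{\lambda^2+i\omega\mu\sigma_j}$ (principal square root), $j=1,\dots,N$. Define $\Psi_j=\dfrac{u_{j-1}-u_j}{u_{j-1}+u_j}$ for $j=1,\dots,N$, and the reflection terms recursively by $R_N=0$, $$R_j=\frac{R_{j+1}+\Psi_{j+1}}{R_{j+1}\Psi_{j+1}+1}\,e^{-2u_jh_j},\quad j=N-1,\dots,1,\qquad R_0=\frac{R_1+\Psi_1}{R_1\Psi_1+1}.$$ Put $c_i=2h_i\sqrt{1+i\omega\mu\sigma_i/\lambda^2}$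 (principal square root) for $i=1,\dots,N-1$, and $\gamma_k=\sum_{i=1}^k c_i$ for $k=1,\dots,N-1$. *)

(* Defs.v *)
From HB Require Import structures.
From mathcomp Require Import all_boot all_order all_algebra.
From mathcomp Require Import complex.
From mathcomp Require Import all_classical all_reals all_analysis.
Set Implicit Arguments. Unset Strict Implicit. Unset Printing Implicit Defensive.
Import Order.TTheory GRing.Theory Num.Theory.
Local Open Scope ring_scope. Local Open Scope complex_scope.

Section Defs.
Variable R : realType.
Local Notation C := R[i].

Definition cexp (z : C) : C :=
  (expR (complex.Re z))%:C * ((cos (complex.Im z)) +i* (sin (complex.Im z)))%C.

Variables (omega mu : R) (N : nat) (sigma h : nat -> R).

Definition u (j : nat) (lam : R) : C :=
  if j == 0%N then lam%:C
  else sqrtc ((lam ^+ 2)%:C + 'i%C * (omega * mu * sigma j)%:C).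

Definition Psi (j : nat) (lam : R) : C :=
  (u j.-1 lam - u j lam) / (u j.-1 lam + u j lam).

(* Rup n j lam = R_j when n = N - j, i.e. R_N = 0 and
   R_j = (R_{j+1} + Psi_{j+1}) / (R_{j+1} Psi_{j+1} + 1) * exp(-2 u_j h_j) *)
Fixpoint Rup (n j : nat) (lam : R) : C :=
  match n with
  | 0%N => 0
  | n'.+1 => let r := Rup n' j.+1 lam in
             (r + Psi j.+1 lam) / (r * Psi j.+1 lam + 1)
             * cexp (- (2%:R * u j lam * (h j)%:C))
  end.

Definition Rrefl (j : nat) (lam : R) : C := Rup (N - j) j lam.

Definition cc (i : nat) (lam : R) : C :=
  2%:R * (h i)%:C * sqrtc (1 + 'i%C * (omega * mu * sigma i / lam ^+ 2)%:C).

Definition gamma (k : nat) (lam : R) : C := \sum_(1 <= i < k.+1) cc i lam.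

End Defs.

(* Main.v *)
Require Import Defs.
From HB Require Import structures.
From mathcomp Require Import all_boot all_order all_algebra.
From mathcomp Require Import complex.
From mathcomp Require Import all_classical all_reals all_analysis.
From mathcomp Require Import ring lra.
Import Order.TTheory GRing.Theory Num.Theory.
Local Open Scope ring_scope. Local Open Scope complex_scope.
Set Implicit Arguments. Unset Strict Implicit.

Definition nc (R : realType) (z : R[i]) : R := Normc.normc z.
Section Basic.
Variable R : realType.

Lemma normE (z : R[i]) : `|z| = (nc z)%:C. Proof. by []. Qed.
Lemma nc_ge0 (z : R[i]) : 0 <= nc z. Proof. by case: z => a b; rewrite /nc /=; rewrite sqrtr_ge0. Qed.
Lemma nc_real (x : R) : nc x%:C = `|x|.
Proof. by rewrite /nc /= expr0n /= addr0 sqrtr_sqr. Qed.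
Lemma nc_i : nc ('i : R[i]) = 1.
Proof. by rewrite /nc /= expr0n /= expr1n add0r sqrtr1. Qed.
Lemma nc_M (z w : R[i]) : nc (z * w) = nc z * nc w. Proof. exact: Normc.normcM. Qed.
Lemma nc_V (z : R[i]) : nc (z^-1) = (nc z)^-1. Proof. exact: Normc.normcV. Qed.
Lemma nc_D (z w : R[i]) : nc (z + w) <= nc z + nc w. Proof. exact: le_normcD. Qed.
Lemma nc_N (z : R[i]) : nc (- z) = nc z. Proof. exact: normcN. Qed.
Lemma nc_B (z w : R[i]) : nc (z - w) <= nc z + nc w.
Proof. by rewrite -(nc_N w) nc_D. Qed.
Lemma Re_le_nc (z : R[i]) : complex.Re z <= nc z.
Proof.
have := normc_ge_Re z; rewrite normE lecR => h.
exact: le_trans (ler_norm _) h.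
Qed.
Lemma nc_lb1 (z w : R[i]) : nc z - nc w <= nc (z + w).
Proof.
have := nc_D (z + w) (- w); rewrite addrK nc_N; lra.
Qed.
Lemma nc_X2 (z : R[i]) : nc (z ^+ 2) = nc z ^+ 2.
Proof. by rewrite !expr2 nc_M. Qed.

Definition cexp' := @cexp R.
Lemma cexpD (z w : R[i]) : cexp z * cexp w = cexp (z + w).
Proof.
case: z => a b; case: w => c d; rewrite /cexp /= expRD cosD sinD.
apply/eqP; rewrite eq_complex /=; apply/andP; split; apply/eqP; ring.
Qed.
Lemma cexp0 : cexp (0 : R[i]) = 1.
Proof. by rewrite /cexp /= expR0 cos0 sin0 mul1r. Qed.
Lemma nc_cexp (z : R[i]) : nc (cexp z) = expR (complex.Re z).
Proof.
rewrite /cexp nc_M nc_real ger0_norm ?expR_ge0 //.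
by rewrite /= cos2Dsin2 sqrtr1 mulr1.
Qed.
Lemma cexp_sum (m n : nat) (F : nat -> R[i]) :
  \prod_(m <= i < n) cexp (F i) = cexp (\sum_(m <= i < n) F i).
Proof.
by rewrite (big_morph (@cexp R) (fun x y => esym (cexpD x y)) cexp0).
Qed.

Lemma Re_sqrtc_ge0 (z : R[i]) : 0 <= complex.Re (sqrtc z).
Proof. by case: z => a b /=; rewrite sqrtr_ge0. Qed.
Lemma Re_sqr (s : R[i]) : complex.Re (s ^+ 2) = complex.Re s ^+ 2 - complex.Im s ^+ 2.
Proof. by case: s => a b; rewrite !expr2. Qed.

Lemma Re_sqrtc_lb (lam a : R) : 0 < lam ->
  lam <= complex.Re (sqrtc ((lam ^+ 2)%:C + 'i * a%:C)).
Proof.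
move=> hl; set s := sqrtc _.
have h1 : complex.Re (s ^+ 2) = lam ^+ 2 by rewrite sqr_sqrtc /=; ring.
have h2 := Re_sqrtc_ge0 ((lam ^+ 2)%:C + 'i * a%:C); rewrite -/s in h2.
rewrite Re_sqr in h1.
have h3 : 0 <= complex.Im s ^+ 2 by rewrite sqr_ge0.
nra.
Qed.

Lemma sqrtc_homog (lam a : R) : 0 < lam ->
  sqrtc (1 + 'i * (a / lam ^+ 2)%:C) * lam%:C = sqrtc ((lam ^+ 2)%:C + 'i * a%:C).
Proof.
move=> hl; set t := sqrtc (1 + _); set s := sqrtc ((lam ^+ 2)%:C + _).
have hs : lam <= complex.Re s by apply: Re_sqrtc_lb.
have ht : 0 < complex.Re t.
  have h1 : complex.Re (t ^+ 2) = 1 by rewrite sqr_sqrtc /=; ring.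
  have h2 := Re_sqrtc_ge0 (1 + 'i * (a / lam ^+ 2)%:C); rewrite -/t in h2.
  rewrite Re_sqr in h1.
  have h3 : 0 <= complex.Im t ^+ 2 by rewrite sqr_ge0.
  nra.
have e2 : (t * lam%:C) ^+ 2 = s ^+ 2.
  rewrite exprMn !sqr_sqrtc -rmorphXn /= mulrDl mul1r -mulrA -rmorphM /=.
  by rewrite divfK // expf_neq0 // gt_eqF.
have : (t * lam%:C - s) * (t * lam%:C + s) = 0.
  by rewrite -subr_sqr e2 subrr.
move/eqP; rewrite mulf_eq0 => /orP[/eqP|/eqP] h.
  by apply/eqP; rewrite -subr_eq0 h.
clearbody t s; clear e2; move: t s ht hs h => [a1 b1] [a2 b2] /= ht hs h.
have := congr1 (@complex.Re R) h; rewrite /= mulr0 subr0 => h'; exfalso; nra.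
Qed.


Lemma nc1 : nc (1 : R[i]) = 1. Proof. exact: Normc.normc1. Qed.
Lemma nc0 : nc (0 : R[i]) = 0. Proof. exact: Normc.normc0. Qed.

Lemma Q_bound (r p : R[i]) : nc r <= 1/2 -> nc p <= 1 ->
  nc ((r * p + 1)^-1 - 1) <= nc p.
Proof.
move=> hr hp.
have h0r := nc_ge0 r; have h0p := nc_ge0 p.
have hy : 1 - nc r * nc p <= nc (r * p + 1).
  have := nc_lb1 1 (r * p); rewrite nc1 nc_M [1 + r * p]addrC; lra.
have hy' : 1/2 <= nc (r * p + 1) by nra.
have hne : r * p + 1 != 0.
  apply/eqP => e; rewrite e in hy'.
  rewrite nc0 in hy'; lra.
have e : ((r * p + 1)^-1 - 1) * (r * p + 1) = - (r * p).
  by rewrite mulrBl mulVf // mul1r; ring.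
have ex : nc ((r * p + 1)^-1 - 1) * nc (r * p + 1) = nc r * nc p.
  by rewrite -nc_M e nc_N nc_M.
have := nc_ge0 ((r * p + 1)^-1 - 1). nra.
Qed.

Lemma mul_step (x y : R[i]) (t c : R) : 0 <= t ->
  nc (x - 1) <= t -> nc (y - 1) <= c - 1 -> nc (x * y - 1) <= (1 + t) * c - 1.
Proof.
move=> ht hx hy.
have e : x * y - 1 = (x - 1) * y + (y - 1) by ring.
have hyc : nc y <= c.
  have := nc_D (y - 1) 1; rewrite subrK.
  rewrite nc1; lra.
have h1 := nc_D ((x - 1) * y) (y - 1).
rewrite nc_M in h1. rewrite e.
have := nc_ge0 (x - 1); have := nc_ge0 y. nra.
Qed.

Lemma prod_bound (t : R) (F : nat -> R[i]) (m n : nat) : 0 <= t ->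
  (forall i, (m <= i < n)%N -> nc (F i - 1) <= t) ->
  nc (\prod_(m <= i < n) F i - 1) <= (1 + t) ^+ (n - m) - 1.
Proof.
move=> ht; elim: n => [|n IH] hF.
  rewrite big_geq // sub0n expr0 subrr subrr.
  by rewrite nc0.
case: (leqP m n) => hmn; last first.
  rewrite big_geq // (_ : n.+1 - m = 0)%N; last by apply/eqP; rewrite subn_eq0.
  rewrite expr0 subrr subrr.
  by rewrite nc0.
rewrite big_nat_recr //= mulrC subSn // exprS.
apply: mul_step => //.
  by apply: hF; rewrite hmn ltnSn.
apply: IH => i /andP[h1 h2]; apply: hF; rewrite h1 /=; exact: ltnW.
Qed.

Lemma pow_bound (t : R) (m : nat) : 0 <= t -> t <= 1 ->
  (1 + t) ^+ m - 1 <= t * (m%:R * 2 ^+ m).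
Proof.
move=> h0 h1; elim: m => [|m IH]; first by rewrite expr0 subrr mul0r mulr0.
rewrite exprS -natr1 exprS.
move: IH; set q := (2:R) ^+ m; set A := (1 + t) ^+ m => IH.
have hq : 1 <= q by rewrite /q exprn_ege1 //; lra.
have hm : 0 <= (m%:R : R) by rewrite ler0n.
have hB : (1 + t) * (A - 1) <= (1 + t) * (t * (m%:R * q)).
  by apply: ler_wpM2l => //; lra.
have hC : 0 <= t * (m%:R * q).
  by apply: mulr_ge0 => //; apply: mulr_ge0 => //; lra.
nra.
Qed.

End Basic.

Section Main.
Variable R : realType.
Variables (omega mu : R) (N : nat) (sigma h : nat -> R).
Variable lam : R.
Hypothesis hlam : (0:R) < lam.

Local Notation a j := (omega * mu * sigma j).
Local Notation U j := (u omega mu sigma j lam).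
Local Notation P j := (Psi omega mu sigma j lam).
Definition Ep j : R[i] := cexp (- (2%:R * U j * (h j)%:C)).
Definition Qf j : R[i] :=
  (Rup omega mu sigma h (N - j.+1) j.+1 lam * P j.+1 + 1)^-1.

Lemma Rup_formula n j : (n + j = N)%N ->
  Rup omega mu sigma h n j lam =
  \sum_(j <= kk < N) P kk.+1 * \prod_(j <= i < kk.+1) (Ep i * Qf i).
Proof.
elim: n j => [|n IH] j hj.
  by rewrite big_geq //= -hj.
have hj' : (n + j.+1 = N)%N by rewrite addnS.
have hjN : (j < N)%N by rewrite -hj' addnS ltnS leq_addl.
rewrite /= big_ltn // big_nat1.
have eQ : Qf j = (Rup omega mu sigma h n j.+1 lam * P j.+1 + 1)^-1.
  by rewrite /Qf -hj' addnK.
rewrite (@eq_big_nat _ _ _ _ _ _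
   (fun kk => (Ep j * Qf j) * (P kk.+1 * \prod_(j.+1 <= i < kk.+1) (Ep i * Qf i)))); last first.
  move=> kk /andP[hk _]; rewrite big_ltn; last by rewrite ltnS ltnW.
  by rewrite mulrCA.
rewrite -mulr_sumr -(IH _ hj') eQ /Ep.
set r := Rup _ _ _ _ _ _ _. set E := cexp _.
ring.
Qed.


Lemma ReD (z w : R[i]) : complex.Re (z + w) = complex.Re z + complex.Re w.
Proof. by case: z; case: w. Qed.

Lemma uE j : (0 < j)%N -> U j = sqrtc ((lam ^+ 2)%:C + 'i * (a j)%:C).
Proof. by case: j. Qed.

Lemma Re_u j : (0 < j)%N -> lam <= complex.Re (U j).
Proof. by move=> hj; rewrite uE //; apply: Re_sqrtc_lb. Qed.

Lemma u_sq j : (0 < j)%N -> U j ^+ 2 = (lam ^+ 2)%:C + 'i * (a j)%:C.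
Proof. by move=> hj; rewrite uE // sqr_sqrtc. Qed.

Lemma nc_u_sub j : (0 < j)%N -> 0 <= a j ->
  nc (U j - lam%:C) * (2 * lam) <= a j.
Proof.
have hl : 0 < lam := hlam.
move=> hj ha.
have e : (U j - lam%:C) * (U j + lam%:C) = 'i * (a j)%:C.
  by rewrite -subr_sqr u_sq // rmorphXn; ring.
have nce : nc (U j - lam%:C) * nc (U j + lam%:C) = a j.
  by rewrite -nc_M e nc_M nc_i nc_real mul1r ger0_norm.
have hre : 2 * lam <= nc (U j + lam%:C).
  have := Re_le_nc (U j + lam%:C); rewrite ReD /=; have := Re_u hj; lra.
have := nc_ge0 (U j - lam%:C); nra.
Qed.

Lemma nc_uu j : (0 < j)%N -> 2 * lam <= nc (U j + U j.+1).
Proof.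
have hl : 0 < lam := hlam.
move=> hj; have := Re_le_nc (U j + U j.+1); rewrite ReD.
have := Re_u hj; have := @Re_u j.+1 isT; lra.
Qed.

Lemma nc_ss j : (0 < j)%N -> 0 <= a j -> 0 <= a j.+1 ->
  nc (U j + U j.+1 - (2 * lam)%:C) * (2 * lam) <= a j + a j.+1.
Proof.
have hl : 0 < lam := hlam.
move=> hj h1 h2.
have -> : U j + U j.+1 - (2 * lam)%:C = (U j - lam%:C) + (U j.+1 - lam%:C).
  by rewrite rmorphM /=; ring.
have := nc_D (U j - lam%:C) (U j.+1 - lam%:C).
have := nc_u_sub hj h1; have := @nc_u_sub j.+1 isT h2. nra.
Qed.

Lemma P_bound j : (0 < j)%N -> 0 <= a j -> 0 <= a j.+1 ->
  nc (P j.+1) * (4 * lam ^+ 2) <= a j + a j.+1.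
Proof.
have hl : 0 < lam := hlam.
move=> hj h1 h2.
have hs := nc_uu hj.
have hne : U j + U j.+1 != 0.
  apply/eqP => e; rewrite e /= expr0n /= addr0 sqrtr0 in hs; lra.
have eP : P j.+1 * (U j + U j.+1) = U j - U j.+1 by rewrite /Psi /= divfK.
have ex : nc (P j.+1) * nc (U j + U j.+1) = nc (U j - U j.+1) by rewrite -nc_M eP.
have hnum : nc (U j - U j.+1) <= nc (U j - lam%:C) + nc (U j.+1 - lam%:C).
  have -> : U j - U j.+1 = (U j - lam%:C) - (U j.+1 - lam%:C) by ring.
  exact: nc_B.
have := nc_u_sub hj h1; have := @nc_u_sub j.+1 isT h2.
have := nc_ge0 (P j.+1). nra.
Qed.


Lemma A_bound j : (0 < j)%N -> 0 <= a j -> 0 <= a j.+1 ->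
  a j + a j.+1 <= 2 * lam ^+ 2 ->
  nc (4%:R * (lam ^+ 2)%:C / (U j + U j.+1) ^+ 2 - 1) * lam ^+ 2 <= a j + a j.+1.
Proof.
have hl : 0 < lam := hlam.
move=> hj h1 h2 hS.
have hs := nc_uu hj.
have hd := nc_ss hj h1 h2.
set s : R[i] := U j + U j.+1 in hs hd *.
have hne : s != 0.
  apply/eqP => e; rewrite e nc0 in hs; lra.
have e : (4%:R * (lam ^+ 2)%:C / s ^+ 2 - 1) * s ^+ 2 =
         - ((s - (2 * lam)%:C) * ((s - (2 * lam)%:C) + (4 * lam)%:C)).
  rewrite mulrBl divfK ?expf_neq0 // !expr2 !rmorphM /= !rmorph_nat; ring.
have ex : nc (4%:R * (lam ^+ 2)%:C / s ^+ 2 - 1) * nc s ^+ 2 =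
          nc (s - (2 * lam)%:C) * nc ((s - (2 * lam)%:C) + (4 * lam)%:C).
  by rewrite -nc_X2 -nc_M e nc_N nc_M.
have hw := nc_D (s - (2 * lam)%:C) (4 * lam)%:C.
rewrite nc_real ger0_norm in hw; last lra.
set x := nc (4%:R * _ / _ - 1) in ex *.
set d := nc (s - (2 * lam)%:C) in hd ex hw.
set w := nc (s - (2 * lam)%:C + (4 * lam)%:C) in ex hw.
have hx : 0 <= x := nc_ge0 _.
have h0d : 0 <= d := nc_ge0 _.
have h0w : 0 <= w := nc_ge0 _.
have hdl : d <= lam by nra.
have hsig : 4 * lam ^+ 2 <= nc s ^+ 2 by nra.
have h3 : x * (4 * lam ^+ 2) <= x * nc s ^+ 2 by apply: ler_wpM2l.
have h4 : d * w <= d * (5 * lam) by apply: ler_wpM2l => //; lra.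
nra.
Qed.

Lemma Re_realM (x : R) (z : R[i]) : complex.Re (x%:C * z) = x * complex.Re z.
Proof. by case: z => c d /=; ring. Qed.

Lemma E_bound j : (0 < j)%N -> 0 <= h j -> nc (Ep j) <= 1.
Proof.
have hl : 0 < lam := hlam.
move=> hj hh; rewrite /Ep nc_cexp expR_le1.
have -> : - (2%:R * U j * (h j)%:C) = (- (2 * h j))%:C * U j.
  by rewrite rmorphN rmorphM /= rmorph_nat; ring.
rewrite Re_realM; have := Re_u hj; nra.
Qed.

Lemma Rup_bound (p : R) :
  0 <= p -> 3 * N%:R * p <= 1/2 ->
  (forall j, (0 < j)%N -> (j < N)%N -> nc (P j.+1) <= p) ->
  (forall j, (0 < j)%N -> (j < N)%N -> nc (Ep j) <= 1) ->
  forall n j, (0 < j)%N -> (n + j = N)%N ->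
  nc (Rup omega mu sigma h n j lam) <= 3 * n%:R * p.
Proof.
move=> hp hpN hP hE; elim=> [|n IH] j hj hnj.
  have -> : Rup omega mu sigma h 0 j lam = 0 by [].
  by rewrite nc0 mulr0 mul0r.
have hjN : (j < N)%N by rewrite -hnj addSn ltnS leq_addl.
have hj' : (n + j.+1 = N)%N by rewrite addnS.
have hr := IH j.+1 isT hj'.
rewrite /=.
set r := Rup _ _ _ _ _ _ _ in hr *.
set pp := P j.+1.
have hpp : nc pp <= p := hP j hj hjN.
have hEj := hE j hj hjN.
have hnN : (n%:R : R) + 1 <= N%:R by rewrite natr1 ler_nat -hnj addSn ltnS leq_addr.
have h0r := nc_ge0 r; have h0pp := nc_ge0 pp; have h0E := nc_ge0 (Ep j).
have hn0 : 0 <= (n%:R : R) by rewrite ler0n.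
have hrb : nc r <= 1/2 by nra.
have hy : 1 - nc r * nc pp <= nc (r * pp + 1).
  have := nc_lb1 1 (r * pp); rewrite nc1 nc_M [1 + r * pp]addrC; lra.
have hy' : 3/4 <= nc (r * pp + 1) by nra.
have hne : r * pp + 1 != 0.
  apply/eqP => e; rewrite e nc0 in hy'; lra.
change (nc ((r + pp) / (r * pp + 1) * Ep j) <= 3 * (n.+1)%:R * p).
rewrite nc_M [nc (_ / _)]nc_M nc_V.
set y := nc (r * pp + 1) in hy hy' *.
have hy0 : 0 < y by lra.
have hnum := nc_D r pp.
set z := nc (r + pp) in hnum *.
have h0z : 0 <= z := nc_ge0 _.
have key : z <= 3 * (n.+1)%:R * p * y.
  have hn1 : (n.+1)%:R = n%:R + 1 :> R by rewrite natr1.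
  rewrite hn1.
  set c := 3 * n%:R * p in hr *.
  have hcp : c + 3 * p <= 1/2.
    have : 3 * (n%:R + 1) * p <= 3 * N%:R * p.
      by apply: ler_wpM2r => //; lra.
    rewrite /c; lra.
  have hrp : nc r * nc pp <= p / 2.
    have := ler_pM h0r h0pp hrb hpp; lra.
  have hrp0 : 0 <= nc r * nc pp by apply: mulr_ge0.
  have hc0 : 0 <= c + 3 * p by rewrite /c; apply: addr_ge0; [apply: mulr_ge0 => //; apply: mulr_ge0 => //; lra | lra].
  have h5 : (c + 3 * p) * (1 - nc r * nc pp) <= (c + 3 * p) * y.
    by apply: ler_wpM2l.
  have h6 : (c + 3 * p) * (nc r * nc pp) <= (1/2) * (p / 2).
    by apply: ler_pM.
  have -> : 3 * (n%:R + 1) * p = c + 3 * p by rewrite /c; ring.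
  nra.
have : z * y^-1 <= 3 * (n.+1)%:R * p by rewrite ler_pdivrMr.
have : 0 <= z * y^-1 by rewrite mulr_ge0 // invr_ge0; lra.
nra.
Qed.

End Main.


Lemma sum_ge_term (R : realType) (F : nat -> R) (m n j : nat) :
  (forall i, (m <= i < n)%N -> 0 <= F i) -> (m <= j < n)%N ->
  F j <= \sum_(m <= i < n) F i.
Proof.
move=> hF /andP[h1 h2].
rewrite (@big_cat_nat _ _ _ j) //=; last exact: ltnW.
rewrite (@big_ltn _ _ _ j n) //.
have s1 : 0 <= \sum_(m <= i < j) F i.
  rewrite big_nat_cond; apply: sumr_ge0 => i /andP[/andP[a b] _].
  by apply: hF; rewrite a /= (ltn_trans b h2).
have s2 : 0 <= \sum_(j.+1 <= i < n) F i.
  rewrite big_nat_cond; apply: sumr_ge0 => i /andP[/andP[a b] _].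
  by apply: hF; rewrite b andbT; apply: leq_trans h1 (ltnW a).
by rewrite addrCA lerDl addr_ge0.
Qed.

Unset Implicit Arguments.
Theorem lemma3 (R : realType) (omega mu : R) (N : nat)
  (sigma h : nat -> R) (k : nat -> R[i]) :
  0 < omega -> 0 < mu -> (2 <= N)%N ->
  (forall j, (1 <= j <= N)%N -> 0 < sigma j) ->
  (forall j, (1 <= j <= N.-1)%N -> 0 < h j) ->
  k 0%N = 0 ->
  (forall j, (1 <= j <= N)%N -> k j ^+ 2 = - ('i%C * (omega * mu * sigma j)%:C)) ->
  exists eps : nat -> R -> R[i],
    (forall kk, (1 <= kk <= N.-1)%N ->
       exists (K M : R), forall lam, M <= lam -> `|eps kk lam| <= (K / lam ^+ 2)%:C)
    /\ exists M : R, forall lam, M <= lam ->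
       Rrefl omega mu N sigma h 1 lam =
       \sum_(1 <= kk < N) (k kk.+1 ^+ 2 - k kk ^+ 2) / (4%:R * (lam ^+ 2)%:C)
          * (1 + eps kk lam) * cexp (- (gamma omega mu sigma h kk lam * lam%:C)).
Proof.
move=> hom hmu hN hsig hh hk0 hk.
have ha : forall j, (1 <= j <= N)%N -> 0 <= omega * mu * sigma j.
  by move=> j hj; apply/ltW; rewrite !mulr_gt0 // hsig.
set S := \sum_(1 <= j < N.+1) omega * mu * sigma j.
have hS : forall j, (1 <= j <= N)%N -> omega * mu * sigma j <= S.
  move=> j hj; apply: sum_ge_term; last by rewrite ltnS.
  by move=> i; rewrite ltnS; apply: ha.
set D := 2 * S.
have hD : forall j, (1 <= j)%N -> (j < N)%N ->
    omega * mu * sigma j + omega * mu * sigma j.+1 <= D.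
  move=> j h1 h2.
  have H1 : omega * mu * sigma j <= S by apply: hS; rewrite h1 ltnW.
  have H2 : omega * mu * sigma j.+1 <= S by apply: hS; rewrite h2.
  rewrite /D; lra.
have hD0 : 0 <= D.
  have := hD 1%N isT hN.
  have H1 : 0 <= omega * mu * sigma 1 by apply: ha; rewrite /= ltnW.
  have H2 : 0 <= omega * mu * sigma 2 by apply: ha; rewrite hN.
  lra.
pose eps := fun kk lam =>
  4%:R * (lam ^+ 2)%:C / (u omega mu sigma kk lam + u omega mu sigma kk.+1 lam) ^+ 2 *
  \prod_(1 <= i < kk.+1) Qf omega mu N sigma h lam i - 1.
exists eps.
set M := 1 + 2 * N%:R * D.
have hNr : (2 : R) <= N%:R by rewrite (ler_nat R 2).
have hM : forall lam, M <= lam -> [/\ 0 < lam, 1 <= lam, M <= lam ^+ 2 & D <= lam ^+ 2].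
  move=> lam hl.
  have hND : 0 <= N%:R * D by apply: mulr_ge0 => //; rewrite ler0n.
  have h1 : 1 <= lam by move: hl; rewrite /M; lra.
  have h2 : lam <= lam ^+ 2 by rewrite expr2; nra.
  split; [lra | lra | lra |].
  have : 2 * D <= 2 * N%:R * D by nra.
  move: hl; rewrite /M; lra.
have Pb : forall lam, M <= lam -> forall j, (0 < j)%N -> (j < N)%N ->
    nc (Psi omega mu sigma j.+1 lam) <= D / (4 * lam ^+ 2).
  move=> lam /hM[hl0 hl1 hlM hlD] j h1 h2.
  have := @P_bound R omega mu sigma lam hl0 j h1 (ha j _) (ha j.+1 _).
  rewrite h1 h2 ltnW //= => H; have := H isT isT.
  have := hD j h1 h2 => Hd Hb.
  rewrite ler_pdivlMr; last by rewrite mulr_gt0 // exprn_gt0.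
  lra.
have Eb : forall lam, M <= lam -> forall j, (0 < j)%N -> (j < N)%N ->
    nc (Ep omega mu sigma h lam j) <= 1.
  move=> lam /hM[hl0 _ _ _] j h1 h2; apply: E_bound => //.
  apply/ltW/hh; rewrite h1 /=; move: h2; case: (N) => // n.
have Rb : forall lam, M <= lam -> forall n j, (0 < j)%N -> (n + j = N)%N ->
    nc (Rup omega mu sigma h n j lam) <= 1/2.
  move=> lam hlam n j h1 h2.
  have [hl0 hl1 hlM hlD] := hM lam hlam.
  have hp0 : 0 <= D / (4 * lam ^+ 2) by rewrite divr_ge0 // mulr_ge0 // sqr_ge0.
  have hpN : 3 * N%:R * (D / (4 * lam ^+ 2)) <= 1/2.
    rewrite mulrA ler_pdivrMr; last by rewrite mulr_gt0 // exprn_gt0.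
    have : 2 * (N%:R * D) <= lam ^+ 2 by move: hlM; rewrite /M; lra.
    have : 0 <= N%:R * D by apply: mulr_ge0 => //; rewrite ler0n.
    lra.
  have := @Rup_bound R omega mu N sigma h lam _ hp0 hpN (Pb lam hlam) (Eb lam hlam) n j h1 h2.
  have hn : (n%:R : R) <= N%:R by rewrite ler_nat -h2 leq_addr.
  have : 3 * n%:R * (D / (4 * lam ^+ 2)) <= 3 * N%:R * (D / (4 * lam ^+ 2)).
    by apply: ler_wpM2r => //; lra.
  lra.
split.
  move=> kk /andP[hk1 hkN].
  have hkN' : (kk < N)%N by move: hkN; case: (N) hN => // n _; rewrite /= ltnS.
  exists (D * (N%:R * 2 ^+ N)), M => lam hlam.
  have [hl0 hl1 hlM hlD] := hM lam hlam.
  rewrite normE lecR.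
  set t := D / lam ^+ 2.
  have ht0 : 0 <= t by rewrite divr_ge0 // sqr_ge0.
  have ht1 : t <= 1 by rewrite /t ler_pdivrMr ?exprn_gt0 // mul1r.
  have hQ : forall i, (1 <= i < kk.+1)%N -> nc (Qf omega mu N sigma h lam i - 1) <= t.
    move=> i /andP[i1 i2].
    have iN : (i < N)%N by apply: leq_trans i2 hkN'.
    rewrite /Qf.
    have hr := Rb lam hlam (N - i.+1)%N i.+1 isT (subnK iN).
    have hp := Pb lam hlam i i1 iN.
    have hpt : D / (4 * lam ^+ 2) <= t.
      have -> : D / (4 * lam ^+ 2) = t / 4 by rewrite /t invfM; ring.
      lra.
    apply: le_trans (Q_bound hr _) _; lra.
  have hA : nc (4%:R * (lam ^+ 2)%:C /
     (u omega mu sigma kk lam + u omega mu sigma kk.+1 lam) ^+ 2 - 1) <= t.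
    have := @A_bound R omega mu sigma lam hl0 kk hk1 (ha kk _) (ha kk.+1 _).
    rewrite hk1 hkN' ltnW //= => H.
    have Hd := hD kk hk1 hkN'.
    have := H isT isT ltac:(lra).
    rewrite /t ler_pdivlMr ?exprn_gt0 //; lra.
  have hP := prod_bound ht0 hQ.
  rewrite subn1 /= in hP.
  have := mul_step ht0 hA (c := (1 + t) ^+ kk) hP.
  rewrite -exprS => H1.
  apply: le_trans H1 _.
  apply: le_trans (pow_bound kk.+1 ht0 ht1) _.
  rewrite /t mulrAC ler_pdivrMr ?exprn_gt0 // divfK; last by rewrite gt_eqF // exprn_gt0.
  apply: ler_wpM2l => //.
  apply: ler_pM.
  - by rewrite ler0n.
  - by apply: exprn_ge0; lra.
  - by rewrite ler_nat.
  - by apply: ler_weXn2l => //; lra.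
exists M => lam hlam.
have [hl0 hl1 hlM hlD] := hM lam hlam.
rewrite /Rrefl (@Rup_formula R omega mu N sigma h lam (N - 1) 1); last first.
  by rewrite subnK // ltnW.
apply: eq_big_nat => kk /andP[hk1 hkN].
rewrite big_split /=.
have hE : \prod_(1 <= i < kk.+1) Ep omega mu sigma h lam i =
          cexp (- (gamma omega mu sigma h kk lam * lam%:C)).
  rewrite /Ep cexp_sum /gamma mulr_suml -sumrN; congr cexp.
  apply: eq_big_nat => i /andP[i1 _].
  have hu := sqrtc_homog (omega * mu * sigma i) hl0.
  rewrite -(uE omega mu sigma lam i1) in hu.
  rewrite /cc -hu; ring.
have hs := @nc_uu R omega mu sigma lam hl0 kk hk1.
set s := u omega mu sigma kk lam + u omega mu sigma kk.+1 lam in hs *.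
have hne : s != 0.
  apply/eqP => e; rewrite e nc0 in hs; lra.
have hcoef : Psi omega mu sigma kk.+1 lam = (k kk.+1 ^+ 2 - k kk ^+ 2) / s ^+ 2 :> R[i].
  have e2 : (u omega mu sigma kk lam ^+ 2 - u omega mu sigma kk.+1 lam ^+ 2 =
            k kk.+1 ^+ 2 - k kk ^+ 2 :> R[i]).
    rewrite !u_sq // hk; last by rewrite hkN.
    rewrite hk; last by rewrite hk1 ltnW.
    rewrite ?complexiE; ring.
  rewrite -e2 /Psi /= -/s.
  by rewrite /s; field.
rewrite hcoef hE /eps /s.
set Q := \prod_(1 <= i < kk.+1) Qf omega mu N sigma h lam i.
set E := cexp _.
field.
apply/andP; split; first exact: hne.
apply/eqP => e.
have : lam = 0 by apply: complexI; rewrite e.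
lra.
Qed.
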